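(* Let $X\subseteq\mathbb{FT}^n$ be a projective $n$-polytope and let $\phi:X\to X$ be an $\mathbb{FT}$-module automorphism. Then (i) $\phi$ extends to an $\mathbb{FT}$-module automorphism of $\mathbb{FT}^n$; and (ii) $\phi$ is the restriction to $X$ of a classical affine linear map $\mathbb{R}^n\to\mathbb{R}^n$.
   Context: $\mathbb{FT}$ is $\mathbb{R}$ with $a\oplus b=\max(a,b)$, $a\otimes b=a+b$. $\mathbb{FT}^n$ is an $\mathbb{FT}$-module under componentwise maximum and scaling $(\lambda\otimes x)_i=\lambda+x_i$; module morphisms preserve $\oplus$ and scaling. A tropical polytope is a finitely generated submodule of $\mathbb{FT}^n$. A module $P$ is projective if for every surjective morphism $\pi:N\to M$ and every morphism $g:P\to M$ there exists a morphism $h:P\to N$ with $\pi\circ h=g$. A projective $n$-polytope in $\mathbb{FT}^n$ is a tropical polytope in $\mathbb{FT}^n$ that is projective as an $\mathbb{FT}$-module and whose generator dimension (minimal cardinality of a generating set) is $n$ (for projective polytopes this equals the topological dimension, which is pure, and the dual dimension). *)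

(* Defs.v *)
From HB Require Import structures.
From mathcomp Require Import all_boot all_order all_algebra.
From mathcomp Require Import reals.
Set Implicit Arguments. Unset Strict Implicit. Unset Printing Implicit Defensive.
Import Order.TTheory GRing.Theory Num.Theory.
Local Open Scope ring_scope.

(* FT = R with a (+) b = max a b, a (x) b = a + b (no -oo). *)

Record ftmod (R : realType) := FTMod {
  car :> Type;
  fjoin : car -> car -> car;
  fscale : R -> car -> car;
  fjoinA : forall x y z, fjoin x (fjoin y z) = fjoin (fjoin x y) z;
  fjoinC : forall x y, fjoin x y = fjoin y x;
  fscaleM : forall l m x, fscale (l + m) x = fscale l (fscale m x);
  fscaleDr : forall l x y, fscale l (fjoin x y) = fjoin (fscale l x) (fscale l y);
  fscaleDl : forall l m x, fscale (Num.max l m) x = fjoin (fscale l x) (fscale m x);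
  fscale0 : forall x, fscale 0 x = x
}.

Definition ft_morph (R : realType) (A B : ftmod R) (f : A -> B) : Prop :=
  (forall x y, f (fjoin x y) = fjoin (f x) (f y)) /\
  (forall l x, f (fscale l x) = fscale l (f x)).

Definition tjoin (R : realType) n (x y : 'rV[R]_n) : 'rV[R]_n :=
  \row_i Num.max (x 0 i) (y 0 i).
Definition tscale (R : realType) n (l : R) (x : 'rV[R]_n) : 'rV[R]_n :=
  \row_i (l + x 0 i).

Definition ftn_morph (R : realType) n (f : 'rV[R]_n -> 'rV[R]_n) : Prop :=
  (forall x y, f (tjoin x y) = tjoin (f x) (f y)) /\
  (forall l x, f (tscale l x) = tscale l (f x)).

Inductive tspan (R : realType) n (s : seq 'rV[R]_n) : 'rV[R]_n -> Prop :=
| tspan_gen x : x \in s -> tspan s x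
| tspan_join x y : tspan s x -> tspan s y -> tspan s (tjoin x y)
| tspan_scale l x : tspan s x -> tspan s (tscale l x).

Definition is_submodule (R : realType) n (X : 'rV[R]_n -> Prop) : Prop :=
  (forall x y, X x -> X y -> X (tjoin x y)) /\
  (forall l x, X x -> X (tscale l x)).

Definition generates (R : realType) n (s : seq 'rV[R]_n) (X : 'rV[R]_n -> Prop) :=
  (forall x, x \in s -> X x) /\ (forall x, X x <-> tspan s x).

Definition tropical_polytope (R : realType) n (X : 'rV[R]_n -> Prop) : Prop :=
  is_submodule X /\ exists s, generates s X.

Definition gen_dim (R : realType) n (X : 'rV[R]_n -> Prop) (k : nat) : Prop :=
  (exists s, size s = k /\ generates s X) /\
  (forall s, generates s X -> (k <= size s)%N).

Definition sub_morph (R : realType) n (X : 'rV[R]_n -> Prop) (M : ftmod R)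
  (g : {x | X x} -> M) : Prop :=
  (forall x y z : {x | X x}, proj1_sig z = tjoin (proj1_sig x) (proj1_sig y) ->
       g z = fjoin (g x) (g y)) /\
  (forall l (x z : {x | X x}), proj1_sig z = tscale l (proj1_sig x) ->
       g z = fscale l (g x)).

Definition projective_sub (R : realType) n (X : 'rV[R]_n -> Prop) : Prop :=
  forall (N M : ftmod R) (pi : N -> M), ft_morph pi -> (forall m, exists y, pi y = m) ->
  forall g : {x | X x} -> M, sub_morph g ->
  exists h : {x | X x} -> N, sub_morph h /\ forall x, pi (h x) = g x.

Definition projective_npolytope (R : realType) n (X : 'rV[R]_n -> Prop) : Prop :=
  tropical_polytope X /\ projective_sub X /\ gen_dim X n.

Definition sub_endo (R : realType) n (X : 'rV[R]_n -> Prop)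
  (phi : {x | X x} -> {x | X x}) : Prop :=
  (forall x y z : {x | X x}, proj1_sig z = tjoin (proj1_sig x) (proj1_sig y) ->
       proj1_sig (phi z) = tjoin (proj1_sig (phi x)) (proj1_sig (phi y))) /\
  (forall l (x z : {x | X x}), proj1_sig z = tscale l (proj1_sig x) ->
       proj1_sig (phi z) = tscale l (proj1_sig (phi x))).

(* Main.v *)
Require Import Defs.
From HB Require Import structures.
From mathcomp Require Import all_boot all_order all_algebra.
From mathcomp Require Import reals.
From Stdlib Require Import ProofIrrelevance ClassicalEpsilon.
From mathcomp Require Import ring lra.
Set Implicit Arguments. Unset Strict Implicit. Unset Printing Implicit Defensive.
Import Order.TTheory GRing.Theory Num.Theory.
Local Open Scope ring_scope.

Lemma sig_eqv (T : Type) (P : T -> Prop) (a b : {x | P x}) :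
  proj1_sig a = proj1_sig b -> a = b.
Proof. case: a b => [a pa] [b pb] /= e; subst; congr exist; apply: proof_irrelevance. Qed.

Lemma choosef (A B : Type) (P : A -> B -> Prop) :
  (forall a, exists b, P a b) -> exists f : A -> B, forall a, P a (f a).
Proof.
move=> H; exists (fun a => proj1_sig (constructive_indefinite_description _ (H a))).
by move=> a; case: (constructive_indefinite_description _ (H a)).
Qed.

Section Aux.
Variable R : realType.

Lemma maxDl (a b c : R) : Num.max a b + c = Num.max (a + c) (b + c).
Proof. by case: (leP a b) => h; [rewrite !max_r // lerD2r | rewrite !max_l // ?lerD2r ltW]. Qed.

Lemma maxDr (a b c : R) : c + Num.max a b = Num.max (c + a) (c + b).
Proof. by rewrite addrC maxDl ![_ + c]addrC. Qed.

Variable m : nat.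
Local Notation N := m.+1.

Definition fmax (F : 'I_N -> R) := foldr (fun i acc => Num.max (F i) acc) (F ord0) (enum 'I_N).

Lemma foldr_ge (F : 'I_N -> R) d r : d <= foldr (fun i acc => Num.max (F i) acc) d r /\
  forall i, i \in r -> F i <= foldr (fun i acc => Num.max (F i) acc) d r.
Proof.
elim: r => [|j r [IH1 IH2]] /=; first by split=> // i; rewrite in_nil.
split; first by rewrite le_max IH1 orbT.
move=> i; rewrite in_cons => /orP [/eqP -> | /IH2 h]; first by rewrite le_max lexx.
by rewrite le_max h orbT.
Qed.

Lemma fmax_ge F i : F i <= fmax F.
Proof. by apply: (proj2 (foldr_ge F (F ord0) (enum 'I_N))); rewrite mem_enum. Qed.

Lemma fmax_le F B : (forall i, F i <= B) -> fmax F <= B.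
Proof.
move=> H; rewrite /fmax; elim: (enum 'I_N) => [|j r IH] /=; first exact: H.
by rewrite ge_max H IH.
Qed.

Lemma fmax_ex F : exists i, fmax F = F i.
Proof.
rewrite /fmax; elim: (enum 'I_N) => [|j r [i IH]] /=; first by exists ord0.
case: (leP (F j) (foldr (fun i acc => Num.max (F i) acc) (F ord0) r)) => h.
  by exists i.
by exists j.
Qed.

Lemma fmax_eq F B : (forall i, F i <= B) -> (exists i, F i = B) -> fmax F = B.
Proof.
move=> H [i Hi]; apply/eqP; rewrite eq_le fmax_le //= -Hi; exact: fmax_ge.
Qed.

Lemma eq_fmax F G : (forall i, F i = G i) -> fmax F = fmax G.
Proof.
move=> H; rewrite /fmax H; elim: (enum 'I_N) => [|j r IH] //=; by rewrite IH H.
Qed.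

Lemma fmax_addl c F : fmax (fun k => c + F k) = c + fmax F.
Proof.
apply: fmax_eq => [k|]; first by rewrite lerD2l fmax_ge.
by case: (fmax_ex F) => j ->; exists j.
Qed.

Lemma fmax_max F G : fmax (fun k => Num.max (F k) (G k)) = Num.max (fmax F) (fmax G).
Proof.
apply: fmax_eq => [k|].
  by rewrite ge_max !le_max !fmax_ge ?orbT.
case: (leP (fmax F) (fmax G)) => h.
  case: (fmax_ex G) => j ej; exists j; rewrite ej max_r //.
  by rewrite -ej; apply: le_trans h; apply: fmax_ge.
case: (fmax_ex F) => j ej; exists j; rewrite ej max_l //.
by rewrite -ej; apply: le_trans (ltW h); apply: fmax_ge.
Qed.

Lemma fmax_mono F G : (forall i, F i <= G i) -> fmax F <= fmax G.
Proof. by move=> H; apply: fmax_le => i; apply: le_trans (H i) _; apply: fmax_ge. Qed.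

Definition fmin (F : 'I_N -> R) := - fmax (fun i => - F i).

Lemma fmin_le F i : fmin F <= F i.
Proof. by rewrite /fmin lerNl; apply: (fmax_ge (fun i => - F i)). Qed.

Lemma fmin_ge F B : (forall i, B <= F i) -> B <= fmin F.
Proof. by move=> H; rewrite /fmin lerNr; apply: fmax_le => i; rewrite lerN2. Qed.

Lemma fmin_ex F : exists i, fmin F = F i.
Proof. by case: (fmax_ex (fun i => - F i)) => i h; exists i; rewrite /fmin h opprK. Qed.

Implicit Types x y : 'rV[R]_N.
Definition vle x y := forall i, x 0 i <= y 0 i.

Lemma rv_eq x y : (forall i, x 0 i = y 0 i) -> x = y.
Proof. by move=> H; apply/rowP. Qed.

Lemma vle_anti x y : vle x y -> vle y x -> x = y.
Proof. by move=> h1 h2; apply: rv_eq => i; apply/eqP; rewrite eq_le h1 h2. Qed.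

Definition bigj (w : 'I_N -> 'rV[R]_N) :=
  foldr (fun p acc => tjoin (w p) acc) (w ord0) (enum 'I_N).

Lemma bigjE w q : bigj w 0 q = fmax (fun p => w p 0 q).
Proof.
rewrite /bigj /fmax; elim: (enum 'I_N) => [|j r IH] /=; first by [].
by rewrite mxE IH.
Qed.

Lemma bigj_ind (P : 'rV[R]_N -> Prop) w :
  (forall a b, P a -> P b -> P (tjoin a b)) -> (forall p, P (w p)) -> P (bigj w).
Proof. by move=> Hj Hw; rewrite /bigj; elim: (enum 'I_N) => [|j r IH] //=; apply: Hj. Qed.

Definition coverf x (w : 'I_N -> 'rV[R]_N) := forall p, vle (w p) x /\ w p 0 p = x 0 p.

Lemma bigj_eq x w : coverf x w -> bigj w = x.
Proof.
move=> H; apply: rv_eq => q; rewrite bigjE; apply: fmax_eq.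
  by move=> p; case: (H p) => h _; exact: h.
by exists q; case: (H q).
Qed.

End Aux.

Section Sub.
Variable R : realType.
Variable m : nat.
Local Notation N := m.+1.
Variable X : 'rV[R]_N -> Prop.
Hypothesis HXs : is_submodule X.
Local Notation S := {x | X x}.

Definition sjoin (a b : S) : S :=
  exist _ (tjoin (proj1_sig a) (proj1_sig b)) (HXs.1 _ _ (proj2_sig a) (proj2_sig b)).
Definition sscale l (a : S) : S :=
  exist _ (tscale l (proj1_sig a)) (HXs.2 l _ (proj2_sig a)).

Lemma tspan_sub (s : seq 'rV[R]_N) : (forall y, y \in s -> X y) ->
  forall x, tspan s x -> X x.
Proof.
move=> Hs x; elim=> [y /Hs //|a b _ Ha _ Hb|l a _ Ha].
  exact: HXs.1.
exact: HXs.2.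
Qed.

Definition smorph (F : S -> 'rV[R]_N) :=
 (forall x y z : S, proj1_sig z = tjoin (proj1_sig x) (proj1_sig y) -> F z = tjoin (F x) (F y)) /\
 (forall l (x z : S), proj1_sig z = tscale l (proj1_sig x) -> F z = tscale l (F x)).

Lemma smono F : smorph F -> forall a b : S, vle (proj1_sig a) (proj1_sig b) -> vle (F a) (F b).
Proof.
move=> [Hj _] a b hab q.
have e : F b = tjoin (F a) (F b).
  apply: Hj; apply: rv_eq => i; rewrite mxE max_r //; exact: hab.
by rewrite e mxE le_max lexx.
Qed.

Lemma sscaleF F : smorph F -> forall l (a : S), F (sscale l a) = tscale l (F a).
Proof. by move=> [_ Hs] l a; apply: Hs. Qed.

Lemma smorph_cover F : smorph F -> forall (x : S) (w : 'I_N -> S),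
  proj1_sig x = bigj (fun p => proj1_sig (w p)) ->
  forall q, exists p, F x 0 q = F (w p) 0 q.
Proof.
move=> [Hj _] x w e.
pose P a := X a /\ forall pa : X a, forall q, exists p, F (exist _ a pa) 0 q = F (w p) 0 q.
have : P (bigj (fun p => proj1_sig (w p))).
  apply: bigj_ind.
    move=> a b [Xa Ha] [Xb Hb]; split; first exact: HXs.1.
    move=> pab q.
    rewrite (Hj (exist _ a Xa) (exist _ b Xb)) // mxE.
    case: (leP (F (exist _ a Xa) 0 q) (F (exist _ b Xb) 0 q)) => _.
      exact: Hb.
    exact: Ha.
  move=> p; split; first exact: proj2_sig.
  move=> pa q; exists p; congr (F _ 0 q); exact: sig_eqv.
rewrite -e => -[_ H] q; case: (H (proj2_sig x) q) => p hp; exists p.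
by rewrite -hp; congr (F _ 0 q); exact: sig_eqv.
Qed.

Lemma smorph_coverf F : smorph F -> forall (x : S) (w : 'I_N -> S),
  coverf (proj1_sig x) (fun p => proj1_sig (w p)) ->
  forall q, exists p, F x 0 q = F (w p) 0 q.
Proof. move=> HF x w /bigj_eq e; apply: smorph_cover => //; by rewrite e. Qed.

Lemma gd_lower : gen_dim X N -> forall u : seq 'rV[R]_N,
  (forall y, y \in u -> X y) ->
  (forall x, X x -> forall p, exists y l, y \in u /\ vle (tscale l y) x /\ l + y 0 p = x 0 p) ->
  (N <= size u)%N.
Proof.
move=> [_ Hgd] u Hu Hc; apply: Hgd; split=> // x; split; last exact: tspan_sub.
move=> Xx.
have [w Hw] : exists w : 'I_N -> 'rV[R]_N, forall p,
    tspan u (w p) /\ vle (w p) x /\ w p 0 p = x 0 p.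
  apply: (@choosef _ _ (fun p w => tspan u w /\ vle w x /\ w 0 p = x 0 p)) => p; case: (Hc x Xx p) => y [l [yu [hle heq]]].
  exists (tscale l y); split; first by apply: tspan_scale; apply: tspan_gen.
  by split=> //; rewrite mxE.
have <- : bigj w = x.
  by apply: bigj_eq => p; case: (Hw p) => _ [].
by apply: bigj_ind => [a b|p]; [apply: tspan_join | case: (Hw p)].
Qed.

End Sub.

Section Mods.
Variable R : realType.
Variable n : nat.

Lemma tj_A (x y z : 'rV[R]_n) : tjoin x (tjoin y z) = tjoin (tjoin x y) z.
Proof. by apply/rowP => i; rewrite !mxE maxA. Qed.
Lemma tj_C (x y : 'rV[R]_n) : tjoin x y = tjoin y x.
Proof. by apply/rowP => i; rewrite !mxE maxC. Qed.
Lemma ts_M l l' (x : 'rV[R]_n) : tscale (l + l') x = tscale l (tscale l' x).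
Proof. by apply/rowP => i; rewrite !mxE addrA. Qed.
Lemma ts_Dr l (x y : 'rV[R]_n) : tscale l (tjoin x y) = tjoin (tscale l x) (tscale l y).
Proof. by apply/rowP => i; rewrite !mxE maxDr. Qed.
Lemma ts_Dl l l' (x : 'rV[R]_n) : tscale (Num.max l l') x = tjoin (tscale l x) (tscale l' x).
Proof. by apply/rowP => i; rewrite !mxE maxDl. Qed.
Lemma ts_0 (x : 'rV[R]_n) : tscale 0 x = x.
Proof. by apply/rowP => i; rewrite !mxE add0r. Qed.

Definition FTn : ftmod R := @FTMod R 'rV[R]_n (@tjoin R n) (@tscale R n) tj_A tj_C ts_M ts_Dr ts_Dl ts_0.

Variable X : 'rV[R]_n -> Prop.
Hypothesis HXs : is_submodule X.
Local Notation S := {x | X x}.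
Definition sjoin' (a b : S) : S :=
  exist _ (tjoin (proj1_sig a) (proj1_sig b)) (HXs.1 _ _ (proj2_sig a) (proj2_sig b)).
Definition sscale' l (a : S) : S :=
  exist _ (tscale l (proj1_sig a)) (HXs.2 l _ (proj2_sig a)).

Lemma sj_A x y z : sjoin' x (sjoin' y z) = sjoin' (sjoin' x y) z.
Proof. by apply: sig_eqv; rewrite /= tj_A. Qed.
Lemma sj_C x y : sjoin' x y = sjoin' y x.
Proof. by apply: sig_eqv; rewrite /= tj_C. Qed.
Lemma ss_M l l' x : sscale' (l + l') x = sscale' l (sscale' l' x).
Proof. by apply: sig_eqv; rewrite /= ts_M. Qed.
Lemma ss_Dr l x y : sscale' l (sjoin' x y) = sjoin' (sscale' l x) (sscale' l y).
Proof. by apply: sig_eqv; rewrite /= ts_Dr. Qed.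
Lemma ss_Dl l l' x : sscale' (Num.max l l') x = sjoin' (sscale' l x) (sscale' l' x).
Proof. by apply: sig_eqv; rewrite /= ts_Dl. Qed.
Lemma ss_0 x : sscale' 0 x = x.
Proof. by apply: sig_eqv; rewrite /= ts_0. Qed.

Definition Xmod : ftmod R := @FTMod R S sjoin' sscale' sj_A sj_C ss_M ss_Dr ss_Dl ss_0.

End Mods.

Section Proj.
Variable R : realType.
Variable m : nat.
Local Notation N := m.+1.
Variable X : 'rV[R]_N -> Prop.
Hypothesis HXs : is_submodule X.
Variable s : seq 'rV[R]_N.
Hypothesis Hsz : size s = N.
Hypothesis Hgen : generates s X.
Local Notation S := {x | X x}.

Definition v (k : 'I_N) := nth 0 s k.
Lemma Xv k : X (v k).
Proof. apply: Hgen.1; apply: mem_nth; by rewrite Hsz. Qed.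
Definition vsig k : S := exist _ (v k) (Xv k).

Definition vpi (a : 'rV[R]_N) := bigj (fun k => tscale (a 0 k) (v k)).
Lemma vpiE a i : vpi a 0 i = fmax (fun k => a 0 k + v k 0 i).
Proof. by rewrite bigjE; apply: eq_fmax => k; rewrite mxE. Qed.
Lemma vpi_X a : X (vpi a).
Proof. apply: bigj_ind => [x y|k]; [exact: HXs.1 | exact: HXs.2 _ _ (Xv k)]. Qed.

Definition vres (x : 'rV[R]_N) := \row_k fmin (fun i => x 0 i - v k 0 i).

Lemma vpi_mono a b : vle a b -> vle (vpi a) (vpi b).
Proof. by move=> H i; rewrite !vpiE; apply: fmax_mono => k; rewrite lerD2r. Qed.

Lemma vres_mono x y : vle x y -> vle (vres x) (vres y).
Proof.
move=> H k; rewrite !mxE; apply: fmin_ge => i; apply: le_trans (fmin_le _ i) _.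
by rewrite lerD2r.
Qed.

Lemma vpi_le x : vle (vpi (vres x)) x.
Proof.
move=> i; rewrite vpiE; apply: fmax_le => k; rewrite mxE.
have := fmin_le (fun i => x 0 i - v k 0 i) i; lra.
Qed.

Lemma vpi_scale l a : vpi (tscale l a) = tscale l (vpi a).
Proof.
apply: rv_eq => i; rewrite mxE !vpiE -fmax_addl; apply: eq_fmax => k.
by rewrite mxE addrA.
Qed.

Lemma vpi_join a b : vpi (tjoin a b) = tjoin (vpi a) (vpi b).
Proof.
apply: rv_eq => i; rewrite mxE !vpiE -fmax_max; apply: eq_fmax => k.
by rewrite mxE maxDl.
Qed.

Lemma vpi_ge x : X x -> vle x (vpi (vres x)).
Proof.
move=> /(proj1 (proj2 Hgen x)); elim=> [y ys|a b _ Ha _ Hb|l a _ Ha].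
- have ki : (index y s < N)%N by move: (ys); rewrite -index_mem Hsz.
  have ey : v (Ordinal ki) = y by rewrite /v /= nth_index.
  move=> i; rewrite vpiE; apply: le_trans (fmax_ge _ (Ordinal ki)).
  rewrite mxE ey; have : 0 <= fmin (fun i0 => y 0 i0 - y 0 i0).
    by apply: fmin_ge => j; rewrite subrr.
  lra.
- move=> i; rewrite mxE ge_max; apply/andP; split.
    apply: le_trans (Ha i) _; apply: vpi_mono; apply: vres_mono => j.
    by rewrite mxE le_max lexx.
  apply: le_trans (Hb i) _; apply: vpi_mono; apply: vres_mono => j.
  by rewrite mxE le_max lexx orbT.
- move=> i; have : vle (tscale l (vres a)) (vres (tscale l a)).
    move=> k; rewrite !mxE; apply: fmin_ge => j; rewrite mxE.
    have := fmin_le (fun i => a 0 i - v k 0 i) j; lra.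
  move=> /vpi_mono /(_ i); rewrite vpi_scale !mxE; have := Ha i; lra.
Qed.

Lemma vpi_vres x : X x -> vpi (vres x) = x.
Proof. by move=> Xx; apply: vle_anti; [apply: vpi_le | apply: vpi_ge]. Qed.

Definition pif (a : car (FTn R N)) : car (Xmod HXs) := exist _ (vpi a) (vpi_X a).

Lemma pif_morph : ft_morph pif.
Proof.
split=> [a b|l a]; apply: sig_eqv => /=; [exact: vpi_join | exact: vpi_scale].
Qed.

Lemma pif_surj (y : car (Xmod HXs)) : exists a, pif a = y.
Proof.
exists (vres (proj1_sig y)); apply: sig_eqv => /=; apply: vpi_vres; exact: proj2_sig.
Qed.

Lemma id_morph : sub_morph (M := Xmod HXs) (fun x : S => x).
Proof. by split=> [x y z e|l x z e]; apply: sig_eqv; rewrite /= e. Qed.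

Hypothesis Hproj : projective_sub X.

Lemma get_h : exists h : S -> 'rV[R]_N, smorph h /\ forall x, vpi (h x) = proj1_sig x.
Proof.
case: (Hproj pif_morph pif_surj id_morph) => h [Hh Hpi].
exists h; split; first exact: Hh.
by move=> x; have := congr1 (@proj1_sig _ _) (Hpi x).
Qed.

End Proj.

Section Key.
Variable R : realType.
Variable m : nat.
Local Notation N := m.+1.
Variable X : 'rV[R]_N -> Prop.
Hypothesis HXs : is_submodule X.
Hypothesis Hgd : gen_dim X N.
Variable s : seq 'rV[R]_N.
Hypothesis Hsz : size s = N.
Hypothesis Hgen : generates s X.
Local Notation S := {x | X x}.
Variable h : S -> 'rV[R]_N.
Hypothesis Hh : smorph h.
Hypothesis Hpih : forall x, vpi s (h x) = proj1_sig x.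
Local Notation v := (v s).
Local Notation vsig := (vsig Hsz Hgen).

Lemma hle (x : S) (k i : 'I_N) : h x 0 k <= proj1_sig x 0 i - v k 0 i.
Proof.
have : vpi s (h x) 0 i = proj1_sig x 0 i by rewrite Hpih.
rewrite vpiE => e.
have := fmax_ge (fun k => h x 0 k + v k 0 i) k; rewrite e; lra.
Qed.

Lemma hatt (x : S) (i : 'I_N) : exists k, proj1_sig x 0 i = h x 0 k + v k 0 i.
Proof.
have : vpi s (h x) 0 i = proj1_sig x 0 i by rewrite Hpih.
rewrite vpiE => e.
by case: (fmax_ex (fun k => h x 0 k + v k 0 i)) => k ek; exists k; rewrite -e ek.
Qed.

Definition Hm k l := h (vsig l) 0 k.

Lemma hgeH (x : S) (l k : 'I_N) : h x 0 l + Hm k l <= h x 0 k.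
Proof.
have H : vle (h (sscale HXs (h x 0 l) (vsig l))) (h x).
  apply: smono => // q; rewrite /= mxE; have := hle x l q; lra.
by move: (H k); rewrite sscaleF // mxE.
Qed.

Lemma mem_vrem (k j : 'I_N) : j != k -> v j \in map v (rem k (enum 'I_N)).
Proof. by move=> nj; apply: map_f; rewrite mem_rem_uniq ?enum_uniq // inE nj mem_enum. Qed.

Lemma size_vrem (k : 'I_N) : size (map v (rem k (enum 'I_N))) = m.
Proof. by rewrite size_map size_rem ?mem_enum // size_enum_ord. Qed.

Lemma X_vrem (k : 'I_N) y : y \in map v (rem k (enum 'I_N)) -> X y.
Proof. by case/mapP => j _ ->; apply: Xv. Qed.

Lemma contra_size (k : 'I_N) : (N <= size (map v (rem k (enum 'I_N))))%N -> False.
Proof. by rewrite size_vrem ltnn. Qed.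

Lemma Hkk (k : 'I_N) : Hm k k = 0.
Proof.
apply/eqP; rewrite eq_le; apply/andP; split.
  by have := hle (vsig k) k k; rewrite /= subrr.
case: (leP 0 (Hm k k)) => // hneg; exfalso.
apply: (contra_size (k := k)); apply: (gd_lower HXs Hgd); first exact: X_vrem.
move=> x Xx p; pose xs : S := exist _ x Xx.
case: (hatt xs p) => j ej.
case: (eqVneq j k) => [ejk|njk].
  subst j; case: (hatt (vsig k) p) => j' ej'.
  case: (eqVneq j' k) => [ej'k|nj'].
    by subst j'; move: ej'; rewrite /= -/(Hm k k); lra.
  exists (v j'), (h xs 0 k + Hm j' k); split; first exact: mem_vrem.
  split.
    move=> q; rewrite mxE; have := hle (vsig k) j' q; have := hle xs k q.
    rewrite /= -/(Hm j' k); lra.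
  move: ej ej'; rewrite /= -/(Hm j' k); lra.
exists (v j), (h xs 0 j); split; first exact: mem_vrem.
split; last by rewrite ej.
by move=> q; rewrite mxE; have := hle xs j q; rewrite /=; lra.
Qed.

Lemma vres_le (x : S) (k : 'I_N) : vres s (proj1_sig x) 0 k <= h x 0 k.
Proof.
have H : vle (h (sscale HXs (vres s (proj1_sig x) 0 k) (vsig k))) (h x).
  apply: smono => // q; rewrite /= !mxE.
  have := fmin_le (fun i => proj1_sig x 0 i - v k 0 i) q; lra.
by move: (H k); rewrite sscaleF // mxE -/(Hm k k) Hkk addr0.
Qed.

Lemma iota_ex (k : 'I_N) : exists i, forall x : S, proj1_sig x 0 i = h x 0 k + v k 0 i.
Proof.
pose t : 'rV[R]_N := \row_l (- Hm k l).
pose z : S := exist _ (vpi s t) (vpi_X HXs Hsz Hgen t).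
pose w l := sscale HXs (t 0 l) (vsig l).
have hz : h z 0 k = 0.
  case: (smorph_cover HXs Hh (x := z) (w := w) erefl k) => l ->.
  by rewrite sscaleF // !mxE -/(Hm k l) addNr.
have := vres_le z k; rewrite mxE.
case: (fmin_ex (fun i => proj1_sig z 0 i - v k 0 i)) => i -> hi.
exists i => x.
have hzl : forall l, - Hm k l + v l 0 i <= proj1_sig z 0 i.
  move=> l; rewrite /= vpiE; have := fmax_ge (fun l => t 0 l + v l 0 i) l.
  by rewrite mxE.
case: (hatt x i) => j ej.
have := hgeH x j k; have := hle x k i; have := hzl j; move: hi ej; rewrite hz; lra.
Qed.

Lemma P1 : exists g : 'I_N -> S, forall i, proj1_sig (g i) 0 i = 0 /\
  forall x : S, vle (tscale (proj1_sig x 0 i) (proj1_sig (g i))) (proj1_sig x).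
Proof.
case: (choosef iota_ex) => iota Hio.
have inj : injective iota.
  move=> k k' e; apply/eqP; apply/negP => /negP nk.
  have e1 := Hio k (vsig k'); have e2 := Hio k' (vsig k'); have e3 := Hio k (vsig k);
  have e4 := Hio k' (vsig k); rewrite e in e1 e3; move: e1 e2 e3 e4.
  rewrite /= -/(Hm k k') -/(Hm k' k') -/(Hm k k) -/(Hm k' k) !Hkk => e1 e2 e3 e4.
  apply: (contra_size (k := k')); apply: (gd_lower HXs Hgd); first exact: X_vrem.
  move=> x Xx p; pose xs : S := exist _ x Xx.
  case: (hatt xs p) => j ej.
  case: (eqVneq j k') => [ejk|njk].
    subst j; exists (v k), (h xs 0 k' + Hm k k'); split; first by rewrite mem_vrem // eq_sym.
    have a1 := hle (vsig k') k p; have a2 := hle (vsig k) k' p.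
    rewrite /= -/(Hm k k') -/(Hm k' k) in a1 a2.
    split.
      move=> q; rewrite mxE; have := hle (vsig k') k q; have := hle xs k' q.
      rewrite /= -/(Hm k k'); lra.
    move: ej; lra.
  exists (v j), (h xs 0 j); split; first exact: mem_vrem.
  split; last by rewrite ej.
  by move=> q; rewrite mxE; have := hle xs j q; rewrite /=; lra.
case: (injF_bij inj) => iinv c1 c2.
exists (fun i => sscale HXs (- v (iinv i) 0 i) (vsig (iinv i))) => i; split.
  by rewrite /= mxE addNr.
move=> x q; rewrite !mxE /=.
have := Hio (iinv i) x; rewrite c2 => e; have := hle x (iinv i) q; lra.
Qed.

End Key.

Section Auto.
Variable R : realType.
Variable m : nat.
Local Notation N := m.+1.
Variable X : 'rV[R]_N -> Prop.
Hypothesis HXs : is_submodule X.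
Hypothesis Hgd : gen_dim X N.
Local Notation S := {x | X x}.
Variable g : 'I_N -> S.
Hypothesis Hg : forall i, proj1_sig (g i) 0 i = 0 /\
  forall x : S, vle (tscale (proj1_sig x 0 i) (proj1_sig (g i))) (proj1_sig x).
Variable phi : S -> S.
Hypothesis Hphi : sub_endo phi.
Hypothesis Hbij : bijective phi.

Let F (y : S) := proj1_sig (phi y).
Let HF : smorph F := Hphi.

Lemma refl_phi (a b : S) : vle (F a) (F b) -> vle (proj1_sig a) (proj1_sig b).
Proof.
move=> H; case: Hbij => psi c1 c2.
have e : sjoin HXs a b = b.
  apply: (can_inj c1); apply: sig_eqv.
  rewrite -/(F _) -/(F b) (HF.1 a b) //; apply: rv_eq => q; rewrite mxE max_r //.
move=> q; have := congr1 (fun z : S => proj1_sig z 0 q) e; rewrite /= mxE => <-.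
by rewrite le_max lexx.
Qed.

Lemma tau_ex i : exists p, forall y : S, F y 0 i = F (g p) 0 i + proj1_sig y 0 p.
Proof.
case: Hbij => psi c1 c2.
pose x := psi (g i).
pose w p := sscale HXs (proj1_sig x 0 p) (g p).
have cov : coverf (proj1_sig x) (fun p => proj1_sig (w p)).
  move=> p; split; first exact: (proj2 (Hg p)).
  by rewrite /= mxE (proj1 (Hg p)) addr0.
case: (smorph_coverf HXs HF cov i) => p.
rewrite /w sscaleF // mxE /F c2 (proj1 (Hg i)) => h0.
exists p => y; apply/eqP; rewrite eq_le; apply/andP; split; last first.
  have H : vle (F (sscale HXs (proj1_sig y 0 p) (g p))) (F y).
    apply: smono => // q; exact: (proj2 (Hg p) y q).
  by move: (H i); rewrite sscaleF // mxE addrC.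
set c := F y 0 i.
have H : vle (F (sscale HXs c x)) (F y).
  rewrite sscaleF // /F c2 => q; exact: (proj2 (Hg i) (phi y) q).
move: (refl_phi H p); rewrite /= mxE; lra.
Qed.

Lemma auto_main : exists (tau : 'I_N -> 'I_N) (mu : 'I_N -> R),
  bijective tau /\ forall (y : S) i, F y 0 i = mu i + proj1_sig y 0 (tau i).
Proof.
case: (choosef tau_ex) => tau Ht.
exists tau, (fun i => F (g (tau i)) 0 i); split; last by move=> y i; apply: Ht.
apply: injF_bij => i i' e; apply/eqP; apply/negP => /negP ni.
case: Hbij => psi c1 c2.
have hd : forall z : S, proj1_sig z 0 i' = proj1_sig z 0 i - (F (g (tau i)) 0 i - F (g (tau i')) 0 i').
  move=> z; have := Ht i (psi z); have := Ht i' (psi z); rewrite /F c2 e; lra.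
set d := _ - _ in hd.
have : (N <= size (map (fun j => proj1_sig (g j)) (rem i' (enum 'I_N))))%N.
  apply: (gd_lower HXs Hgd).
    by move=> y /mapP [j _ ->]; exact: proj2_sig.
  move=> x Xx p; pose xs : S := exist _ x Xx.
  case: (eqVneq p i') => [ep|np].
    subst p; exists (proj1_sig (g i)), (x 0 i); split.
      by apply: map_f; rewrite mem_rem_uniq ?enum_uniq // inE ni mem_enum.
    split; first exact: (proj2 (Hg i) xs).
    have := hd (g i); have := hd xs; rewrite /= (proj1 (Hg i)); lra.
  exists (proj1_sig (g p)), (x 0 p); split.
    by apply: map_f; rewrite mem_rem_uniq ?enum_uniq // inE np mem_enum.
  split; first exact: (proj2 (Hg p) xs).
  by rewrite (proj1 (Hg p)) addr0.
by rewrite size_map size_rem ?mem_enum // size_enum_ord ltnn.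
Qed.

End Auto.

Theorem theorem7p4 (R : realType) (n : nat) (X : 'rV[R]_n -> Prop)
  (phi : {x | X x} -> {x | X x}) :
  projective_npolytope X ->
  sub_endo phi -> bijective phi ->
  (exists Phi : 'rV[R]_n -> 'rV[R]_n,
      ftn_morph Phi /\ bijective Phi /\
      forall x : {x | X x}, Phi (proj1_sig x) = proj1_sig (phi x)) /\
  (exists (A : 'M[R]_n) (b : 'rV[R]_n),
      forall x : {x | X x}, proj1_sig (phi x) = proj1_sig x *m A + b).
Proof.
case: n X phi => [|m] X phi.
  move=> _ _ _; split.
    exists id; split; first by split.
    split; first by exists id.
    by move=> x; apply/rowP => -[].
  by exists 0, 0 => x; apply/rowP => -[].
move=> [[HXs _] [Hproj Hgd]] Hphi Hbij.
case: (Hgd) => [[s [Hsz Hgen]] _].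
case: (get_h HXs Hsz Hgen Hproj) => h [Hh Hpih].
case: (P1 HXs Hgd Hsz Hgen Hh Hpih) => g Hg.
case: (auto_main HXs Hgd Hg Hphi Hbij) => tau [mu [Htau Hf]].
case: Htau => tinv t1 t2.
split.
  exists (fun y => \row_i (mu i + y 0 (tau i))); split.
    split=> [x y|l x]; apply/rowP => i; rewrite !mxE; first exact: maxDr.
    by rewrite addrCA.
  split.
    exists (fun z : 'rV[R]_m.+1 => \row_j (z 0 (tinv j) - mu (tinv j))) => y; apply/rowP => j;
      rewrite !mxE; [rewrite t2 | rewrite t1]; lra.
  by move=> x; apply/rowP => i; rewrite mxE Hf.
exists (\matrix_(k, i) ((k == tau i)%:R)), (\row_i mu i) => x; apply/rowP => i.
rewrite Hf !mxE (bigD1 (tau i)) //= mxE eqxx mulr1 big1 ?addr0 1?addrC //.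
by move=> k /negbTE nk; rewrite mxE nk mulr0.
Qed.
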